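(* Suppose $\mathbb{F}$ has characteristic $2$. Let $G_0\subseteq \mathrm{SL}(V)$ be a subgroup whose order $|G_0|$ is even. Then $\mathcal{Q}_{G_0\rtimes V}(\Omega)=\emptyset$, i.e. there is no $(G_0\rtimes V)$-covariant quadrature system for $(\Omega,V)$. Equivalently, there is no $G_0$-invariant Weyl multiplier $m$ for $(V,S)$, whatever the symplectic form $S$.
   Context: $\mathbb{F}$ is a finite field with $|\mathbb{F}|=2^n$, and $\mathrm{Tr}:\mathbb{F}\to\mathbb{Z}_2$, $\mathrm{Tr}\,\alpha=\sum_{k=0}^{n-1}\alpha^{2^k}$, is its trace. $V$ is a $2$-dimensional $\mathbb{F}$-vector space, and $\Omega$ is a set on which the additive group $V$ acts freely and transitively, written $x\mapsto x+\mathbf{v}$. A direction is a $1$-dimensional subspace $D\subset V$. A line is a set $x+D=\{x+\mathbf{d}:\mathbf{d}\in D\}$; $\mathrm{Aff}(\Omega)$ is the set of all lines and $\mathrm{Aff}_D(\Omega)$ the set of lines parallel to $D$. A quadrature system on an $|\mathbb{F}|$-dimensional Hilbert space $\mathcal{H}$ is a map $\mathsf{Q}$ from $\mathrm{Aff}(\Omega)$ to operators on $\mathcal{H}$ such that: (i) each $\mathsf{Q}(\mathfrak{l})$ is a rank-one orthogonal projection; (ii) $\sum_{\mathfrak{l}\in\mathrm{Aff}_D(\Omega)}\mathsf{Q}(\mathfrak{l})=I$ for every direction $D$; (iii) $\mathrm{tr}(\mathsf{Q}(\mathfrak{l}_1)\mathsf{Q}(\mathfrak{l}_2))=1/|\mathbb{F}|$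 whenever $\mathfrak{l}_1,\mathfrak{l}_2$ are parallel to different directions. Fix an origin $o\in\Omega$ and write $x=o+\mathbf{u}_{o,x}$. The affine group $\mathrm{GL}(V)\rtimes V$ acts on $\Omega$ by $(A,\mathbf{v})\cdot x=o+A(\mathbf{u}_{o,x}+\mathbf{v})$, and on lines by $(A,\mathbf{v})\cdot(x+D)=(A,\mathbf{v})\cdot x+AD$. For a subgroup $G\subseteq\mathrm{GL}(V)\rtimes V$, a quadrature system $\mathsf{Q}$ is $G$-covariant if there is a projective unitary representation $U$ of $G$ on $\mathcal{H}$ with $\mathsf{Q}(g\cdot\mathfrak{l})=U(g)\mathsf{Q}(\mathfrak{l})U(g)^*$ for all lines $\mathfrak{l}$ and all $g\in G$. $\mathcal{Q}_G(\Omega)$ denotes the set of $G$-covariant quadrature systems, and $V$ is identified with the subgroup of translations $\{(I,\mathbf{v})\}$. A symplectic form on $V$ is a nonzero $\mathbb{F}$-bilinear $S:V\times V\to\mathbb{F}$ with $S(\mathbf{v},\mathbf{v})=0$ for all $\mathbf{v}$. A Weyl multiplier for $(V,S)$ is a function $m:V\times V\to\{z\in\mathbb{C}:|z|=1\}$ with the following properties: - the cocycle identity $m(\mathbf{u}+\mathbf{v},\mathbf{w})m(\mathbf{u},\mathbf{v})=m(\mathbf{u},\mathbf{v}+\mathbf{w})m(\mathbf{v},\mathbf{w})$ holds; - (M.1) $m(\mathbf{d}_1,\mathbf{d}_2)=1$ whenever $\mathbf{d}_1,\mathbf{d}_2$ lie in a common direction; - (M.2) $\overline{m(\mathbf{u},\mathbf{v})}\,m(\mathbf{v},\mathbf{u})=(-1)^{\mathrm{Tr}\,S(\mathbf{u},\mathbf{v})}$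 for all $\mathbf{u},\mathbf{v}$. $m$ is $G_0$-invariant if $m(A\mathbf{u},A\mathbf{v})=m(\mathbf{u},\mathbf{v})$ for all $A\in G_0$ and all $\mathbf{u},\mathbf{v}\in V$. For $G_0\subseteq \mathrm{SL}(V)$, a $V$-covariant quadrature system is $(G_0\rtimes V)$-covariant if and only if its associated Weyl multiplier is $G_0$-invariant. *)

(* Defs.v *)
From HB Require Import structures.
From mathcomp Require Import all_boot all_order all_algebra all_fingroup all_field.
Set Implicit Arguments. Unset Strict Implicit. Unset Printing Implicit Defensive.
Import Order.TTheory GRing.Theory Num.Theory.
Local Open Scope ring_scope.

(* |F| = 2^n, n := logn 2 #|F|; Tr a = \sum_(k<n) a^(2^k), an element of the
   prime field {0,1} of F. *)
Definition ftrace (F : finFieldType) (a : F) : F :=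
  \sum_(k < logn 2 #|F|) a ^+ (2 ^ k).

(* (-1)^(Tr a) as an element of C : Tr a is 0 or 1 in F. *)
Definition sign_tr (F : finFieldType) (C : numClosedFieldType) (a : F) : C :=
  if ftrace a == 0 then 1 else -1.

Definition symplectic_form (F : finFieldType) (S : 'cV[F]_2 -> 'cV[F]_2 -> F) : Prop :=
  [/\ (forall (a : F) u v w, S (a *: u + v) w = a * S u w + S v w),
      (forall (a : F) u v w, S u (a *: v + w) = a * S u v + S u w),
      (forall v, S v v = 0) &
      (exists u v, S u v != 0)].

Definition common_direction (F : finFieldType) (d1 d2 : 'cV[F]_2) : Prop :=
  exists2 d : 'cV[F]_2, d != 0 & exists a b : F, d1 = a *: d /\ d2 = b *: d.

Definition weyl_multiplier (F : finFieldType) (C : numClosedFieldType)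
    (S : 'cV[F]_2 -> 'cV[F]_2 -> F) (m : 'cV[F]_2 -> 'cV[F]_2 -> C) : Prop :=
  [/\ (forall u v, `|m u v| = 1),
      (forall u v w, m (u + v) w * m u v = m u (v + w) * m v w),
      (forall d1 d2, common_direction d1 d2 -> m d1 d2 = 1) &
      (forall u v, (m u v)^* * m v u = sign_tr C (S u v))].

Definition in_SL (F : finFieldType) (G0 : {group {'GL_2[F]}}) : Prop :=
  forall A, A \in G0 -> \det (GLval A) = 1.

Definition G0_invariant (F : finFieldType) (C : numClosedFieldType)
    (G0 : {group {'GL_2[F]}}) (m : 'cV[F]_2 -> 'cV[F]_2 -> C) : Prop :=
  forall A, A \in G0 -> forall u v : 'cV[F]_2,
    m (GLval A *m u) (GLval A *m v) = m u v.

(* Main.v *)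
Require Import Defs.
From HB Require Import structures.
From mathcomp Require Import all_boot all_order all_algebra all_fingroup all_field all_solvable.
From mathcomp Require Import ring zify.
Import Order.TTheory GRing.Theory Num.Theory.
Local Open Scope ring_scope.

Lemma trace_nz (F : finFieldType) : (2%N \in [pchar F]) -> exists z : F, ftrace z != 0.
Proof.
move=> H2.
have hc : #|F| = (2 ^ logn 2 #|F|)%N := card_pprimeChar H2.
have hgt := finNzRing_gt1 F.
move: hc; rewrite /ftrace; set n := logn 2 #|F| => hc.
case: n hc => [|n'] hc; first by rewrite hc in hgt.
pose Q : {poly F} := \sum_(k < n') 'X^(2 ^ k).
pose P : {poly F} := Q + 'X^(2 ^ n').
have hQ : (size Q <= 2 ^ n')%N.
  apply: leq_trans (size_sum _ _ _) _; apply/bigmax_leqP => k _.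
  by rewrite size_polyXn ltn_exp2l.
have hP : size P = (2 ^ n').+1.
  by rewrite /P addrC size_polyDl size_polyXn // ltnS.
have hPz : forall z, P.[z] = \sum_(k < n'.+1) z ^+ (2 ^ k).
  by move=> z; rewrite big_ord_recr /= /P hornerD horner_sum hornerXn;
     congr (_ + _); apply: eq_bigr => k _; rewrite hornerXn.
case: (pickP (fun z : F => \sum_(k < n'.+1) z ^+ (2 ^ k) != 0)) => [z hz|hn].
  by exists z.
have : (size (enum F) < size P)%N.
  apply: max_poly_roots; last exact: enum_uniq.
    by rewrite -size_poly_gt0 hP.
  apply/allP => z _; rewrite /root hPz; have := hn z; by move/negbFE.
rewrite hP -cardE hc expnS; have : (0 < 2 ^ n')%N by rewrite expn_gt0.
lia.
Qed.
Lemma cd_scale (F : finFieldType) (v : 'cV[F]_2) (a b : F) :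
  common_direction (a *: v) (b *: v).
Proof.
case: (eqVneq v 0) => [->|hv]; last by exists v => //; exists a, b.
exists (const_mx 1).
  by apply/eqP => /matrixP /(_ 0 0); rewrite !mxE; apply/eqP; exact: oner_neq0.
by exists 0, 0; rewrite !scaler0 !scale0r.
Qed.

Lemma core (F : finFieldType) (C : numClosedFieldType) S (m : 'cV[F]_2 -> 'cV[F]_2 -> C)
  (x y : 'cV[F]_2) :
  weyl_multiplier S m -> m (x + y) y = m x y -> y + y = 0 ->
  ftrace (S x y) != 0 -> False.
Proof.
case=> hn hc hd hs hinv hyy htr.
have cd1 v : m v v = 1 by have := hd _ _ (@cd_scale _ v 1 1); rewrite scale1r.
have hx0 : m x 0 = 1.
  by have := hd _ _ (@cd_scale _ x 1 0); rewrite scale1r scale0r.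
have h0y : m (y + y) x = 1.
  by rewrite hyy; have := hd _ _ (@cd_scale _ x 0 1); rewrite scale1r scale0r.
have e1 : m x y * m x y = 1.
  by have := hc x y y; rewrite hinv hyy hx0 cd1 mulr1.
have e2 : m x y = m y (x + y).
  have := hc x y (x + y); rewrite cd1 mul1r (addrC x) addrA hyy add0r cd1 mul1r.
  by [].
have e3 : m x y * m y x = 1.
  by have := hc y y x; rewrite h0y cd1 mulr1 (addrC y x) -e2 => <-.
have e4 : (m x y)^* * m y x = -1 by rewrite hs /sign_tr (negbTE htr).
have e5 : (m x y)^* * m x y = 1.
  by rewrite mulrC -normCK hn expr1n.
set a := m x y in e1 e3 e4 e5; set b := m y x in e3 e4; set c := a^* in e4 e5.
have eb : b = c by rewrite -[b]mul1r -e5 -mulrA e3 mulr1.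
have ec : c = a by rewrite -[c]mulr1 -e1 mulrA e5 mul1r.
move: e4; rewrite eb ec e1 => /eqP; rewrite -subr_eq0 opprK -mulr2n.
by rewrite pnatr_eq0.
Qed.
Lemma cV2P (F : fieldType) (u v : 'cV[F]_2) : u 0 0 = v 0 0 -> u 1 0 = v 1 0 -> u = v.
Proof.
move=> h0 h1; apply/matrixP => i j; rewrite (ord1 j).
case: i => [[|[|//]]] Hi.
  by rewrite (_ : Ordinal Hi = 0) //; apply: val_inj.
by rewrite (_ : Ordinal Hi = 1) //; apply: val_inj.
Qed.

Lemma cV2_neq0 (F : fieldType) (u : 'cV[F]_2) : u != 0 -> u 0 0 != 0 \/ u 1 0 != 0.
Proof.
move=> hu; case: (eqVneq (u 0 0) 0) => h0; last by left.
case: (eqVneq (u 1 0) 0) => h1; last by right.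
by move: hu; rewrite (@cV2P _ u 0) ?eqxx // mxE.
Qed.

Lemma S_nz (F : finFieldType) S (N : 'M[F]_2) (x : 'cV[F]_2) :
  symplectic_form S -> N *m N = 0 -> N *m x != 0 -> S x (N *m x) != 0.
Proof.
case=> hl hr ha [u0 [v0 huv]] hNN hx.
set y := N *m x in hx *.
have S0l w : S 0 w = 0.
  by have := hl 1 0 0 w; rewrite scale1r addr0 mul1r -{1}[S 0 w]addr0 => /addrI <-.
have S0r w : S w 0 = 0.
  by have := hr 1 w 0 0; rewrite scale1r addr0 mul1r -{1}[S w 0]addr0 => /addrI <-.
have SZl a u w : S (a *: u) w = a * S u w.
  by have := hl a u 0 w; rewrite addr0 S0l addr0.
have SDl u v w : S (u + v) w = S u w + S v w.
  by have := hl 1 u v w; rewrite scale1r mul1r.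
have SZr a u w : S w (a *: u) = a * S w u.
  by have := hr a w u 0; rewrite addr0 S0r addr0.
have SDr u v w : S w (u + v) = S w u + S w v.
  by have := hr 1 w u v; rewrite scale1r mul1r.
have Santi u v : S v u = - S u v.
  have := ha (u + v); rewrite SDl !SDr !ha add0r addr0 => /eqP.
  by rewrite addr_eq0 => /eqP ->; rewrite opprK.
have hx0 : x != 0 by apply: contra hx => /eqP e; rewrite /y e mulmx0.
have hNy : N *m y = 0 by rewrite /y mulmxA hNN mul0mx.
have hyN : N *m x = y by [].
clearbody y.
pose D := x 0 0 * y 1 0 - x 1 0 * y 0 0.
have hD : D != 0.
  apply/negP => /eqP hD0; move/eqP: hD0; rewrite subr_eq0 => /eqP hD0.
  suff [c hc] : exists c, y = c *: x.
    have : N *m y = c *: y by rewrite {1}hc -scalemxAr hyN.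
    rewrite hNy => /esym /eqP; rewrite scaler_eq0 (negbTE hx) orbF => /eqP c0.
    by move: hx; rewrite hc c0 scale0r eqxx.
  case: (eqVneq (x 0 0) 0) => h00.
    have h10 : x 1 0 != 0.
      by case: (@cV2_neq0 _ _ hx0) => //; rewrite h00 eqxx.
    have y00 : y 0 0 = 0.
      by move: hD0; rewrite h00 mul0r => /esym /eqP; rewrite mulf_eq0 (negbTE h10) => /eqP.
    exists (y 1 0 / x 1 0); apply: cV2P; rewrite !mxE ?h00 ?y00.
      by rewrite mulr0.
    by rewrite mulfVK.
  exists (y 0 0 / x 0 0); apply: cV2P; rewrite !mxE.
    by rewrite mulfVK.
  by apply: (mulfI h00); rewrite hD0; field.
apply/negP => /eqP hS; move: huv; apply/negP; rewrite negbK.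
have span (w : 'cV[F]_2) : w = ((w 0 0 * y 1 0 - w 1 0 * y 0 0) / D) *: x + ((x 0 0 * w 1 0 - x 1 0 * w 0 0) / D) *: y.
  apply: cV2P; rewrite !mxE /D; field; exact: hD.
rewrite (span u0) (span v0) !SDl !SDr !SZl !SZr !ha (Santi x y) hS.
by rewrite !(mulr0, oppr0, addr0).
Qed.

Lemma S_scale (F : finFieldType) S (a b : F) u v :
  symplectic_form S -> S (a *: u) (b *: v) = a * b * S u v.
Proof.
case=> hl hr _ _.
have S0l w : S 0 w = 0.
  by have := hl 1 0 0 w; rewrite scale1r addr0 mul1r -{1}[S 0 w]addr0 => /addrI <-.
have S0r w : S w 0 = 0.
  by have := hr 1 w 0 0; rewrite scale1r addr0 mul1r -{1}[S w 0]addr0 => /addrI <-.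
have := hl a u 0 (b *: v); rewrite addr0 S0l addr0 => ->.
have := hr b u v 0; rewrite addr0 S0r addr0 => ->.
by rewrite mulrA.
Qed.

Lemma two0 (F : finFieldType) m n (X : 'M[F]_(m, n)) : (2%N \in [pchar F]) -> X + X = 0.
Proof.
move=> H2; apply/matrixP => i j; rewrite !mxE -mulr2n -mulr_natr.
by rewrite (pcharf0 H2) mulr0.
Qed.

Lemma sq_inj (F : finFieldType) : (2%N \in [pchar F]) -> injective (fun b : F => b * b).
Proof.
move=> H2 b c /= e.
have : (b - c) * (b - c) = (b * b - c * c) + 2%:R * (c * c - b * c) by ring.
rewrite e subrr add0r (pcharf0 H2) mul0r => /eqP; rewrite mulf_eq0 orbb subr_eq0.
by move/eqP.
Qed.

Theorem lemma3p1 (F : finFieldType) (C : numClosedFieldType)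
  (G0 : {group {'GL_2[F]}}) :
  (2%N \in [pchar F]) -> in_SL G0 -> ~~ odd #|G0| ->
  forall S : 'cV[F]_2 -> 'cV[F]_2 -> F, symplectic_form S ->
  ~ (exists m : 'cV[F]_2 -> 'cV[F]_2 -> C, weyl_multiplier S m /\ G0_invariant G0 m).
Proof.
move=> H2 _ hodd S hS [m [hw hinv]].
have [A hA oA] := Cauchy (isT : prime 2) (eq_ind_r is_true hodd (dvdn2 _)).
set M := GLval A.
have hMM : M * M = 1.
  have := expg_order A; rewrite oA expgS expg1 => /(congr1 (@GLval _ _)).
  by rewrite GL_ME GL_1E.
have hM1 : M != 1.
  apply/eqP => e; have eA : A = 1%g.
    apply: val_inj; change (GLval A = GLval 1%g); rewrite GL_1E; exact: e.
  by move: oA; rewrite eA order1.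
pose N := M - 1.
have hNN : N *m N = 0.
  rewrite mulmxE /N mulrBl !mulrBr hMM mul1r mulr1.
  by rewrite mulr1 opprB two0.
have [x0 hx0] : exists x0 : 'cV[F]_2, N *m x0 != 0.
  case: (pickP (fun j : 'I_2 => N *m (delta_mx j 0 : 'cV[F]_2) != 0)) => [j hj | hn].
    by exists (delta_mx j 0).
  move: hM1; rewrite -subr_eq0 -/N => /eqP []; apply/matrixP => i j.
  have := hn j; move/negbFE/eqP; rewrite -colE => /matrixP /(_ i 0).
  by rewrite !mxE.
set y0 := N *m x0 in hx0.
have hs : S x0 y0 != 0 by apply: S_nz.
have [z hz] := @trace_nz F H2.
have hb := f_invF (@sq_inj F H2) (z / S x0 y0).
set b := invF _ _ in hb; simpl in hb.
pose x := b *: x0; pose y := N *m x.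
have hy : y = b *: y0 by rewrite /y /x /y0 scalemxAr.
have hM : M = N + 1 by rewrite /N subrK.
have hMx : M *m x = x + y by rewrite hM mulmxDl mul1mx addrC.
have hMy : M *m y = y.
  by rewrite hM mulmxDl mul1mx /y mulmxA hNN mul0mx add0r.
apply: (@core F C S m x y hw).
- by have := hinv A hA x y; rewrite -/M hMx hMy.
- exact: two0.
rewrite hy /x S_scale // hb mulfVK //.
Qed.
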